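(* Under the standing assumptions below, $P(t)=Q(t)$ is the unique $1$-periodic smooth family of projections $P(t)$ onto co-dimension-one subspaces (rank $n-1$) such that $X(t)P(0)=P(t)X(t)$ for all $t$ and $\Gamma(t)$ restricts to a bijection of $\operatorname{Im}P(t)$ onto itself for every $t$.
   Context: Let $n\ge 1$, let $f:\mathbb{R}^n\to\mathbb{R}^n$ be smooth, let $T>0$, and let $\gamma:\mathbb{R}\to\mathbb{R}^n$ be a $1$-periodic solution of $\dot x=Tf(x)$ with $f(\gamma(0))\neq 0$. Let $X(t)$ be the $n\times n$ matrix solution of $\dot X=T\,\mathrm{D}f(\gamma(t))X$, $X(0)=I_n$. Let $\Gamma(t):=X(t)(X(1)-I_n)X^{-1}(t)$. Hyperbolicity assumption: there is a vector $w\in\mathbb{R}^n$ such that $Q(t):=X(t)\big(I_n-f(\gamma(0))w^\mathsf{T}\big)X^{-1}(t)$ is a projection for every $t$, the family is $1$-periodic, and $\Gamma(t)$ restricts to a bijection of $\operatorname{Im}Q(t)$ onto itself. *)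

(* Defs.v *)
From HB Require Import structures.
From mathcomp Require Import all_boot all_order all_algebra.
From mathcomp Require Import all_classical all_reals all_analysis.
Set Implicit Arguments. Unset Strict Implicit. Unset Printing Implicit Defensive.
Import Order.TTheory GRing.Theory Num.Theory.
Import numFieldNormedType.Exports.
Local Open Scope classical_set_scope.
Local Open Scope ring_scope.

Fixpoint Ck {R : realType} {V W : normedModType R} (k : nat) (f : V -> W)
  : Prop :=
  match k with
  | 0 => continuous f
  | k'.+1 => (forall x, differentiable f x) /\
             (forall v : V, Ck k' (fun x => 'D_v f x))
  end.

Definition smooth {R : realType} {V W : normedModType R} (f : V -> W) : Prop :=
  forall k, Ck k f.

Definition mx_image {R : realType} {n : nat} (A : 'M[R]_n) : set 'cV[R]_n :=
  [set v | exists u : 'cV[R]_n, v = A *m u].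

Definition restricts_bij_on_image {R : realType} {n : nat} (A P : 'M[R]_n)
  : Prop :=
  set_bij (mx_image P) (mx_image P) (fun v : 'cV[R]_n => A *m v).

(* Main.v *)
Require Import Defs.
From HB Require Import structures.
From mathcomp Require Import all_boot all_order all_algebra.
From mathcomp Require Import all_classical all_reals all_analysis.
From mathcomp Require Import perm.
From mathcomp Require Import ring lra zify.
From Stdlib Require Import Lia.
Import Order.TTheory GRing.Theory Num.Theory.
Import numFieldNormedType.Exports.
Local Open Scope classical_set_scope.
Local Open Scope ring_scope.

Section CkGen.
Context {R : realType} {V W : normedModType R}.

Lemma Ck_cont k (f : V -> W) : Ck k f -> continuous f.
Proof.
case: k => [//|k] [df _] x; exact: differentiable_continuous.
Qed.

Lemma Ck_mono k (f : V -> W) : Ck k.+1 f -> Ck k f.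
Proof.
elim: k f => [|k IH] f.
  by move=> [df _] x; apply: differentiable_continuous.
by move=> [df Df]; split => // v; apply: IH.
Qed.

Lemma Ck_cst k (c : W) : Ck k (fun _ : V => c).
Proof.
elim: k c => [|k IH] c; first by move=> x; apply: cvg_cst.
split=> [x|v]; first exact: differentiable_cst.
have -> : (fun x => 'D_v (fun _ : V => c) x) = (fun _ => 0).
  by apply/funext => x; rewrite (derive_cst c).
exact: IH.
Qed.

Lemma CkD k (f g : V -> W) : Ck k f -> Ck k g -> Ck k (fun x => f x + g x).
Proof.
elim: k f g => [|k IH] f g.
  move=> cf cg x; apply: continuousD; [exact: cf|exact: cg].
move=> [df Df] [dg Dg]; split=> [x|v].
  exact: (differentiableD (df x) (dg x)).
have -> : (fun x => 'D_v (fun x => f x + g x) x) = (fun x => 'D_v f x + 'D_v g x).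
  apply/funext => x; rewrite (deriveD (f:=f) (g:=g)) //; exact: diff_derivable.
by apply: IH; [exact: Df|exact: Dg].
Qed.

Lemma CkZ k (c : R) (f : V -> W) : Ck k f -> Ck k (fun x => c *: f x).
Proof.
elim: k f => [|k IH] f.
  move=> cf x; apply: continuousZ; [exact: cvg_cst|exact: cf].
move=> [df Df]; split=> [x|v].
  exact: (differentiableZ c (df x)).
have -> : (fun x => 'D_v (fun x => c *: f x) x) = (fun x => c *: 'D_v f x).
  apply/funext => x; rewrite (deriveZ (f:=f)) //; exact: diff_derivable.
by apply: IH; exact: Df.
Qed.

End CkGen.
Arguments Ck_mono {R V W k f}.


Section CkLin.
Context {R : realType} {V W W' : normedModType R}.

Lemma Ck_lin k (L : {linear W -> W'}) (f : V -> W) :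
  continuous L -> Ck k f -> Ck k (fun x => L (f x)).
Proof.
move=> cL; elim: k f => [|k IH] f.
  by move=> cf x; apply: continuous_comp; [exact: cf|exact: cL].
move=> [df Df]; split=> [x|v].
  exact: (differentiable_comp (df x) (linear_differentiable _ cL)).
have -> : (fun x => 'D_v (fun x => L (f x)) x) = (fun x => L ('D_v f x)).
  apply/funext => x.
  rewrite (deriveE v (differentiable_comp (df x) (linear_differentiable _ cL))).
  rewrite (diff_comp (df x) (linear_differentiable _ cL)) /= diff_lin //.
  by rewrite deriveE.
by apply: IH; exact: Df.
Qed.

Lemma Ck_sum_seq k (I : Type) (r : seq I) (P : pred I) (F : I -> V -> W) :
  (forall i, P i -> Ck k (F i)) -> Ck k (fun t => \sum_(i <- r | P i) F i t).
Proof.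
move=> HF; elim: r => [|a r IH].
  have -> : (fun t => \sum_(i <- [::] | P i) F i t) = (fun _ => 0).
    by apply/funext => t; rewrite big_nil.
  exact: Ck_cst.
have -> : (fun t => \sum_(i <- a :: r | P i) F i t) =
   (fun t => (if P a then F a t else 0) + \sum_(i <- r | P i) F i t).
  by apply/funext => t; rewrite big_cons; case: (P a) => //; rewrite add0r.
apply: CkD => //; case Pa: (P a); [exact: HF|exact: Ck_cst].
Qed.

Lemma Ck_sum k (I : finType) (P : pred I) (F : I -> V -> W) :
  (forall i, P i -> Ck k (F i)) -> Ck k (fun t => \sum_(i | P i) F i t).
Proof. exact: Ck_sum_seq. Qed.

End CkLin.

Section CkR.
Context {R : realType}.

Lemma CkSE {W : normedModType R} k (h : R -> W) :
  Ck k.+1 h <-> (forall x, differentiable h x) /\ Ck k (fun x => 'D_1 h x).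
Proof.
split=> [[dh Dh]|[dh Dh]]; first by split => //; exact: Dh.
split=> // v.
have -> : (fun x => 'D_v h x) = (fun x => v *: 'D_1 h x).
  apply/funext => x; rewrite !deriveE // diff1E // scale1r.
  by rewrite derive1E.
exact: CkZ.
Qed.

Lemma CkM k (s u : R -> R) : Ck k s -> Ck k u -> Ck k (fun x => s x * u x).
Proof.
elim: k s u => [|k IH] s u.
  by move=> cs cu x; apply: continuousM; [exact: cs|exact: cu].
move=> /CkSE [ds Ds] /CkSE [du Du]; apply/CkSE; split=> [x|].
  exact: (differentiableM (ds x) (du x)).
have -> : (fun x => 'D_1 (fun x => s x * u x) x) =
    (fun x => s x * 'D_1 u x + u x * 'D_1 s x).
  apply/funext => x.
  by rewrite (deriveM (f:=s) (g:=u)) //; exact: diff_derivable.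
apply: CkD; apply: IH => //; apply: Ck_mono; apply/CkSE; by split.
Qed.

Lemma Ck_inv k (s : R -> R) : (forall x, s x != 0) -> Ck k s ->
  Ck k (fun x => (s x)^-1).
Proof.
move=> s0; elim: k => [|k IH].
  move=> cs x; apply: continuous_comp; first exact: cs.
  exact: inv_continuous.
move=> Cs; have /CkSE [ds Ds] := Cs; apply/CkSE; split=> [x|].
  exact: (differentiableV (ds x) (s0 x)).
have -> : (fun x => 'D_1 (fun x => (s x)^-1) x) =
    (fun x => - ((s x)^-1 * ((s x)^-1 * 'D_1 s x))).
  apply/funext => x.
  rewrite (deriveV (s0 x)); last exact: diff_derivable.
  by rewrite mulrA -expr2 exprVn -mulNr.
have -> : (fun x => - ((s x)^-1 * ((s x)^-1 * 'D_1 s x))) =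
    (fun x => (-1) *: ((s x)^-1 * ((s x)^-1 * 'D_1 s x))).
  by apply/funext => x; rewrite scaleN1r.
have IH' := IH (Ck_mono Cs).
by apply: CkZ; apply: CkM => //; apply: CkM.
Qed.

Lemma Ck_prod_seq k (I : Type) (r : seq I) (P : pred I) (F : I -> R -> R) :
  (forall i, P i -> Ck k (F i)) -> Ck k (fun t => \prod_(i <- r | P i) F i t).
Proof.
move=> HF; elim: r => [|a r IH].
  have -> : (fun t => \prod_(i <- [::] | P i) F i t) = (fun _ => 1).
    by apply/funext => t; rewrite big_nil.
  exact: Ck_cst.
have -> : (fun t => \prod_(i <- a :: r | P i) F i t) =
   (fun t => (if P a then F a t else 1) * \prod_(i <- r | P i) F i t).
  by apply/funext => t; rewrite big_cons; case: (P a) => //; rewrite mul1r.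
apply: CkM => //; case Pa: (P a); [exact: HF|exact: Ck_cst].
Qed.

Lemma Ck_prod k (I : finType) (P : pred I) (F : I -> R -> R) :
  (forall i, P i -> Ck k (F i)) -> Ck k (fun t => \prod_(i | P i) F i t).
Proof. exact: Ck_prod_seq. Qed.

End CkR.

Lemma Ck_linf {R : realType} {V W W' : normedModType R} k (L : W -> W') (f : V -> W) :
  linear L -> continuous L -> Ck k f -> Ck k (fun x => L (f x)).
Proof.
move=> linL cL Cf.
pose LL : {linear W -> W'} := HB.pack L (GRing.isLinear.Build _ _ _ _ _ linL).
exact: (@Ck_lin R V W W' k LL f cL Cf).
Qed.

Section CkMx.
Context {R : realType}.

Lemma Ck_mxP {V : normedModType R} k m n (M : V -> 'M[R]_(m, n)) :
  Ck k M <-> forall i j, Ck k (fun t => M t i j).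
Proof.
split=> [CM i j|CM].
  apply: (@Ck_linf R V _ R k (fun A : 'M[R]_(m, n) => A i j)) => //.
    by move=> a A B; rewrite !mxE.
  exact: coord_continuous.
have -> : M = (fun t => \sum_(i < m) \sum_(j < n) (M t i j) *: (delta_mx i j : 'M[R]_(m, n))).
  by apply/funext => t; rewrite {1}(matrix_sum_delta (M t)).
apply: Ck_sum => i _; apply: Ck_sum => j _.
apply: (@Ck_linf R V R _ k (fun x : R => x *: (delta_mx i j : 'M[R]_(m, n))) (fun t => M t i j)) => //.
  by move=> a x y; rewrite scalerDl scalerA.
exact: scalel_continuous.
Qed.

End CkMx.

Section CkMx2.
Context {R : realType}.

Lemma Ck_mulmx k m n p (A : R -> 'M[R]_(m, n)) (B : R -> 'M[R]_(n, p)) :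
  Ck k A -> Ck k B -> Ck k (fun t => A t *m B t).
Proof.
move=> /Ck_mxP CA /Ck_mxP CB; apply/Ck_mxP => i j.
have -> : (fun t => (A t *m B t) i j) = (fun t => \sum_l A t i l * B t l j).
  by apply/funext => t; rewrite mxE.
by apply: Ck_sum => l _; apply: CkM.
Qed.

Lemma Ck_det k m (A : R -> 'M[R]_m) : Ck k A -> Ck k (fun t => \det (A t)).
Proof.
move=> /Ck_mxP CA.
have -> : (fun t => \det (A t)) = (fun t => \sum_(s : 'S_m)
    ((-1) ^+ s * \prod_i A t i (s i))).
  by apply/funext => t; rewrite /determinant.
apply: Ck_sum => s _; apply: CkM; first exact: Ck_cst.
by apply: Ck_prod => i _.
Qed.

Lemma Ck_cofactor k m (A : R -> 'M[R]_m) i j :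
  Ck k A -> Ck k (fun t => cofactor (A t) i j).
Proof.
move=> /Ck_mxP CA.
have -> : (fun t => cofactor (A t) i j) = (fun t => \sum_(s : 'S_m | s i == j)
    ((-1) ^+ s * \prod_(l | i != l) A t l (s l))).
  by apply/funext => t; rewrite expand_cofactor.
apply: Ck_sum => s _; apply: CkM; first exact: Ck_cst.
by apply: Ck_prod => l _.
Qed.

Lemma Ck_invmx k m (A : R -> 'M[R]_m) : (forall t, A t \in unitmx) ->
  Ck k A -> Ck k (fun t => invmx (A t)).
Proof.
move=> uA CA; apply/Ck_mxP => i j.
have -> : (fun t => invmx (A t) i j) =
    (fun t => (\det (A t))^-1 * cofactor (A t) j i).
  by apply/funext => t; rewrite /invmx uA !mxE.
apply: CkM; last exact: Ck_cofactor.
apply: Ck_inv; last exact: Ck_det.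
by move=> t; have := uA t; rewrite unitmxE unitfE.
Qed.

End CkMx2.

Section CkComp.
Context {R : realType}.

Lemma CkZf k m n (s : R -> R) (u : R -> 'M[R]_(m, n)) :
  Ck k s -> Ck k u -> Ck k (fun t => s t *: u t).
Proof.
move=> Cs /Ck_mxP Cu; apply/Ck_mxP => i j.
have -> : (fun t => (s t *: u t) i j) = (fun t => s t * u t i j).
  by apply/funext => t; rewrite mxE.
exact: CkM.
Qed.

Lemma Ck_comp k n (g : 'rV[R]_n -> 'rV[R]_n) (ga : R -> 'rV[R]_n) :
  Ck k g -> Ck k ga -> Ck k (fun t => g (ga t)).
Proof.
elim: k g ga => [|k IH] g ga.
  by move=> cg cga x; apply: (continuous_comp (cga x) (cg (ga x))).
move=> [dg Dg] Cga; have /CkSE [dga Dga] := Cga; apply/CkSE; split=> [x|].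
  exact: (differentiable_comp (dga x) (dg (ga x))).
have -> : (fun x => 'D_1 (fun t => g (ga t)) x) =
    (fun x => \sum_(i < n) ('D_1 ga x) 0 i *: 'D_('e_i) g (ga x)).
  apply/funext => x.
  have dc := differentiable_comp (dga x) (dg (ga x)).
  rewrite (deriveE (1 : R) dc) (diff_comp (dga x) (dg (ga x))) /=.
  rewrite -(deriveE (1 : R) (dga x)).
  rewrite {1}(row_sum_delta ('D_1 ga x)) linear_sum.
  apply: eq_bigr => i _; rewrite linearZ /=.
  by rewrite -deriveE.
apply: Ck_sum => i _; apply: CkZf.
  by move: Dga => /Ck_mxP; apply.
exact: (IH _ ga (Dg 'e_i) (Ck_mono Cga)).
Qed.

End CkComp.

Section Der.
Context {R : realType}.

Lemma is_derive_ent m n (M : R -> 'M[R]_(m, n)) t (dM : 'M[R]_(m, n)) i j :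
  is_derive t (1 : R) M dM -> is_derive t (1 : R) (fun s => M s i j) (dM i j).
Proof.
move=> [dv dval]; apply: DeriveDef.
  exact: ((derivable_mxP M t 1).1 dv i j).
by rewrite -dval derive_mx // mxE.
Qed.

Lemma is_derive_mx m n (M : R -> 'M[R]_(m, n)) t (dM : 'M[R]_(m, n)) :
  (forall i j, is_derive t (1 : R) (fun s => M s i j) (dM i j)) -> is_derive t (1 : R) M dM.
Proof.
move=> H; apply: DeriveDef.
  by apply/derivable_mxP => i j; by case: (H i j).
rewrite derive_mx; last by apply/derivable_mxP => i j; by case: (H i j).
by apply/matrixP => i j; rewrite mxE derive_val.
Qed.

Lemma is_derive_sumf {W : normedModType R} (I : finType) (F : I -> R -> W) (dF : I -> W) t :
  (forall i, is_derive t (1 : R) (F i) (dF i)) ->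
  is_derive t (1 : R) (fun s => \sum_i F i s) (\sum_i dF i).
Proof.
move=> H.
suff : forall r : seq I, is_derive t (1 : R) (fun s => \sum_(i <- r) F i s) (\sum_(i <- r) dF i).
  by apply.
elim=> [|a r IH].
  have -> : (fun s => \sum_(i <- [::]) F i s) = cst 0.
    by apply/funext => s; rewrite big_nil.
  by rewrite big_nil; exact: is_derive_cst.
have -> : (fun s => \sum_(i <- a :: r) F i s) = F a + (fun s => \sum_(i <- r) F i s).
  by apply/funext => s; rewrite big_cons.
rewrite big_cons; exact: is_deriveD.
Qed.

Lemma is_derive_linf {W W' : normedModType R} (L : W -> W') (M : R -> W) t (dM : W) :
  linear L -> continuous L -> is_derive t (1 : R) M dM ->
  is_derive t (1 : R) (fun s => L (M s)) (L dM).
Proof.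
move=> linL cL [dv dval].
pose LL : {linear W -> W'} := HB.pack L (GRing.isLinear.Build _ _ _ _ _ linL).
have dMt : differentiable M t by apply/derivable1_diffP.
have cLL : continuous LL := cL.
have dc : differentiable (LL \o M) t.
  exact: (differentiable_comp dMt (linear_differentiable _ cLL)).
apply: DeriveDef.
  by apply/derivable1_diffP; exact: dc.
have -> : (fun s => L (M s)) = LL \o M by [].
rewrite (deriveE (1 : R) dc) (diff_comp dMt (linear_differentiable _ cLL)) /=.
rewrite (diff_lin (f:=LL)) //.
by rewrite -deriveE // dval.
Qed.

Lemma is_derive_mulmxr m n p (M : R -> 'M[R]_(m, n)) (B : 'M[R]_(n, p)) t (dM : 'M[R]_(m, n)) :
  is_derive t (1 : R) M dM -> is_derive t (1 : R) (fun s => M s *m B) (dM *m B).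
Proof.
move=> HdM; apply: (@is_derive_linf _ _ (fun A : 'M[R]_(m, n) => A *m B)) => //.
  by move=> a A C; rewrite mulmxDl scalemxAl.
apply: (proj2 (@Ck_mxP R _ 0 m p (fun A : 'M[R]_(m, n) => A *m B))) => i j.
have -> : (fun t => (t *m B) i j) = (fun t : 'M[R]_(m, n) => \sum_l t i l * B l j).
  by apply/funext => A; rewrite mxE.
apply: Ck_sum => l _ /= x.
have h1 := (@coord_continuous R m n i l x).
have h2 : {for x, continuous (fun _ : 'M[R]_(m, n) => B l j)} by exact: cst_continuous.
exact: (continuousM h1 h2).
Qed.

Lemma is_derive_tr m n (M : R -> 'M[R]_(m, n)) t (dM : 'M[R]_(m, n)) :
  is_derive t (1 : R) M dM -> is_derive t (1 : R) (fun s => (M s)^T) dM^T.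
Proof.
move=> HdM; apply: is_derive_mx => i j; rewrite mxE.
have -> : (fun s => (M s)^T i j) = (fun s => M s j i).
  by apply/funext => s; rewrite mxE.
exact: is_derive_ent.
Qed.

End Der.

Section Gron.
Context {R : realType}.

Lemma deriv_gexp (g : R -> R) (dg : R) c x : is_derive x (1 : R) g dg ->
  is_derive x (1 : R) (fun s => g s * expR (c * s)) (expR (c * x) * (dg + c * g x)).
Proof.
move=> Hg.
have hin : is_derive x (1 : R) (fun s : R => c * s) c.
  have H := @is_deriveZ R R R id c x 1 1 (is_derive_id x 1).
  have -> : (fun s : R => c * s) = c \*: id by [].
  by apply: (is_derive_eq H); rewrite /GRing.scale /= mulr1.
have he : is_derive x (1 : R) (fun s => expR (c * s)) (expR (c * x) * c).
  have H := @is_derive1_comp R expR (fun s => c * s) x _ _ (is_derive_expR (c * x)) hin.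
  exact: H.
have H := is_deriveM Hg he.
have -> : (fun s => g s * expR (c * s)) = g * (fun s => expR (c * s)) by [].
apply: (is_derive_eq H).
rewrite /GRing.scale /=; ring.
Qed.

Lemma quad_bound n (a : 'M[R]_n) (z : 'cV[R]_n) (M : R) : 0 <= M ->
  (forall i j, `|a i j| <= M) ->
  `|\sum_i (z i 0 * (a *m z) i 0 + z i 0 * (a *m z) i 0)| <=
    (2 * M * n%:R) * \sum_i z i 0 ^+ 2.
Proof.
move=> M0 aM.
set S := \sum_i z i 0 ^+ 2.
set N := \sum_l `|z l 0|.
have h1 i : `|(a *m z) i 0| <= M * N.
  rewrite mxE (le_trans (ler_norm_sum _ _ _)) // /N mulr_sumr ler_sum // => l _.
  by rewrite normrM ler_wpM2r.
apply: (le_trans (ler_norm_sum _ _ _)).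
apply: (@le_trans _ _ (\sum_i (2 * M) * (`|z i 0| * N))).
  apply: ler_sum => i _.
  rewrite -mulr2n normrMn normrM mulr2n.
  have := h1 i; have := normr_ge0 (z i 0); have := normr_ge0 ((a *m z) i 0).
  move=> p1 p2 p3.
  have h := ler_wpM2l p2 p3.
  apply: (le_trans (lerD h h)); rewrite le_eqVlt; apply/orP; left; apply/eqP.
  ring.
rewrite -mulr_sumr /N.
have -> : \sum_i `|z i 0| * \sum_l `|z l 0| = \sum_i \sum_l `|z i 0| * `|z l 0|.
  by apply: eq_bigr => i _; rewrite mulr_sumr.
have h2 : 2 * (\sum_i \sum_l `|z i 0| * `|z l 0|) <=
    \sum_i \sum_l (z i 0 ^+ 2 + z l 0 ^+ 2).
  rewrite mulr_sumr ler_sum // => i _; rewrite mulr_sumr ler_sum // => l _.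
  rewrite -[z i 0 ^+ 2]real_normK ?num_real // -[z l 0 ^+ 2]real_normK ?num_real //.
  rewrite -subr_ge0.
  have -> : `|z i 0| ^+ 2 + `|z l 0| ^+ 2 - 2 * (`|z i 0| * `|z l 0|) =
     (`|z i 0| - `|z l 0|) ^+ 2 by ring.
  exact: sqr_ge0.
have h3 : \sum_i \sum_l (z i 0 ^+ 2 + z l 0 ^+ 2) = (2 * n%:R) * S.
  have e1 i : \sum_(l < n) (z i 0 ^+ 2 + z l 0 ^+ 2) = z i 0 ^+ 2 *+ n + S.
    by rewrite big_split /= sumr_const card_ord.
  rewrite (eq_bigr _ (fun i _ => e1 i)) big_split /= sumrMnl sumr_const card_ord -/S.
  rewrite !mulr_natr; ring.
apply: (@le_trans _ _ (M * (2 * n%:R * S))).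
  have -> : 2 * M * (\sum_i \sum_l `|z i 0| * `|z l 0|) =
      M * (2 * (\sum_i \sum_l `|z i 0| * `|z l 0|)) by ring.
  by apply: ler_wpM2l => //; rewrite -h3.
by rewrite le_eqVlt; apply/orP; left; apply/eqP; ring.
Qed.

End Gron.

Section Gron2.
Context {R : realType}.

Lemma le_sum_term n (F : 'I_n -> R) i : (forall j, 0 <= F j) -> F i <= \sum_j F j.
Proof.
move=> F0; rewrite (bigD1 i) //= lerDl; apply: sumr_ge0 => j _; exact: F0.
Qed.

Lemma bound_on n (A : R -> 'M[R]_n) (a b : R) :
  (forall i j, continuous (fun t => A t i j)) -> a <= b ->
  exists M : R, 0 <= M /\ forall s, a <= s -> s <= b -> forall i j, `|A s i j| <= M.
Proof.
move=> cA ab.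
pose F := fun s => \sum_i \sum_j `|A s i j|.
have cF : continuous F.
  have : Ck 0 F.
    apply: Ck_sum => i _; apply: Ck_sum => j _ /= x.
    exact: (continuous_comp (cA i j x) (@norm_continuous _ _ _)).
  by [].
have [c _ Hc] := EVT_max ab (continuous_subspaceT cF).
exists (F c); split.
  by apply: sumr_ge0 => i _; apply: sumr_ge0 => j _.
move=> s sa sb i j.
have sab : s \in `[a, b] by rewrite in_itv /= sa sb.
apply: (le_trans _ (Hc s sab)).
have h1 : `|A s i j| <= \sum_(j0 < n) `|A s i j0|.
  exact: (le_sum_term _ (fun j0 => `|A s i j0|) j (fun _ => normr_ge0 _)).
apply: (le_trans h1).
apply: (le_sum_term _ (fun i => \sum_j `|A s i j|) i) => i'.
by apply: sumr_ge0.
Qed.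

Lemma ode_zero n (A : R -> 'M[R]_n) (Z : R -> 'cV[R]_n) (t0 : R) :
  (forall i j, continuous (fun t => A t i j)) ->
  (forall t, is_derive t (1 : R) Z (A t *m Z t)) -> Z t0 = 0 -> forall t, Z t = 0.
Proof.
move=> cA dZ Z0 t1.
pose g := fun s => \sum_i Z s i 0 ^+ 2.
pose dg := fun s => \sum_i (Z s i 0 * (A s *m Z s) i 0 + Z s i 0 * (A s *m Z s) i 0).
have Hg s : is_derive s (1 : R) g (dg s).
  rewrite /g /dg.
  apply: (@is_derive_sumf R R _ (fun i s => Z s i 0 ^+ 2)) => i.
  have he := @is_derive_ent R n 1 Z s _ i 0 (dZ s).
  have H := is_deriveM he he.
  have -> : (fun s0 => Z s0 i 0 ^+ 2) = (fun s0 => Z s0 i 0) * (fun s0 => Z s0 i 0).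
    by apply/funext => x; rewrite expr2.
  exact: (is_derive_eq H).
have g0 : g t0 = 0.
  rewrite /g Z0; apply: big1 => i _; by rewrite mxE expr0n.
have gge0 s : 0 <= g s by apply: sumr_ge0 => i _; apply: sqr_ge0.
have fin : forall e, g t1 * expR e <= 0 -> Z t1 = 0.
  move=> e; rewrite pmulr_lle0 ?expR_gt0 // => gle.
  have g1 : g t1 = 0 by apply/eqP; rewrite eq_le gle gge0.
  apply/matrixP => i j; rewrite [j]ord1 mxE.
  have := psumr_eq0P (fun i _ => sqr_ge0 (Z t1 i 0)) g1 (i:=i) isT.
  by move/eqP; rewrite sqrf_eq0 => /eqP.
have hcont : forall c, continuous (fun s => g s * expR (c * s)).
  move=> c x; apply: differentiable_continuous; apply/derivable1_diffP.
  by case: (@deriv_gexp R g (dg x) c x (Hg x)).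
have [le01|le10] := leP t0 t1.
- have [M [M0 HM]] := @bound_on n A t0 t1 cA le01.
  pose C := 2 * M * n%:R.
  apply: (fin (- C * t1)).
  have h := @ler0_derive1_nincr R (fun s => g s * expR (- C * s)) t0 t1.
  have := h _ _ (continuous_subspaceT (hcont (- C))) t0 t1 (le_refl _) le01 (le_refl _).
  + rewrite g0 mul0r; apply.
  + by move=> x _; case: (@deriv_gexp R g (dg x) (- C) x (Hg x)).
  + move=> x; rewrite in_itv /= => /andP [x0 x1].
    rewrite derive1E; have [_ ->] := @deriv_gexp R g (dg x) (- C) x (Hg x).
    rewrite pmulr_rle0 ?expR_gt0 //.
    have bd := @quad_bound R n (A x) (Z x) M M0 (HM x (ltW x0) (ltW x1)).
    have := ler_norm (dg x); rewrite /dg /g => h1.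
    rewrite -/C in bd.
    rewrite mulNr subr_le0; exact: (le_trans h1 bd).
- have le10' := ltW le10.
  have [M [M0 HM]] := @bound_on n A t1 t0 cA le10'.
  pose C := 2 * M * n%:R.
  apply: (fin (C * t1)).
  have h := @ger0_derive1_ndecr R (fun s => g s * expR (C * s)) t1 t0.
  have := h _ _ (continuous_subspaceT (hcont C)) t1 t0 (le_refl _) le10' (le_refl _).
  + rewrite g0 mul0r; apply.
  + by move=> x _; case: (@deriv_gexp R g (dg x) C x (Hg x)).
  + move=> x; rewrite in_itv /= => /andP [x0 x1].
    rewrite derive1E; have [_ ->] := @deriv_gexp R g (dg x) C x (Hg x).
    rewrite pmulr_rge0 ?expR_gt0 //.
    have bd := @quad_bound R n (A x) (Z x) M M0 (HM x (ltW x0) (ltW x1)).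
    have := ler_norm (- dg x); rewrite normrN /dg /g => h1.
    rewrite -/C in bd.
    rewrite addrC -[X in 0 <= _ + X]opprK subr_ge0; exact: (le_trans h1 bd).
Qed.

End Gron2.

Section Main.
Context {R : realType} {n : nat} (f : 'rV[R]_n -> 'rV[R]_n) (T : R)
  (gamma : R -> 'rV[R]_n) (X : R -> 'M[R]_n).
Context (sf : smooth f)
  (dgam : forall t : R, is_derive t (1 : R) gamma (T *: f (gamma t)))
  (dX : forall t : R, is_derive t (1 : R) X (T *: ((('J f (gamma t))^T) *m X t))).

Lemma gamma_Ck k : Ck k gamma.
Proof.
elim: k => [|k IH].
  move=> x; apply: differentiable_continuous; apply/derivable1_diffP.
  by case: (dgam x).
apply/CkSE; split.
  move=> x; apply/derivable1_diffP; by case: (dgam x).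
have -> : (fun x => 'D_1 gamma x) = (fun x => T *: f (gamma x)).
  by apply/funext => x; case: (dgam x).
by apply: CkZ; apply: Ck_comp => //; exact: sf.
Qed.

Lemma J_entry x i j : ('J f x) i j = ('D_('e_i) f x) 0 j.
Proof.
rewrite deriveEjacobian; last exact: (proj1 (sf 1) x).
by rewrite -(rowE i ('J f x)) [in RHS]mxE.
Qed.

Lemma JT_Ck k : Ck k (fun t => ('J f (gamma t))^T).
Proof.
apply/Ck_mxP => i j.
have -> : (fun t => ('J f (gamma t))^T i j) = (fun t => ('D_('e_j) f (gamma t)) 0 i).
  by apply/funext => t; rewrite mxE J_entry.
have C1 : Ck k (fun t => 'D_('e_j) f (gamma t)).
  exact: (@Ck_comp R k n _ gamma (proj2 (sf k.+1) 'e_j) (gamma_Ck k)).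
by move: C1 => /Ck_mxP; apply.
Qed.

Definition Am t := T *: ('J f (gamma t))^T.

Lemma A_Ck k : Ck k Am.
Proof. by apply: CkZ; exact: JT_Ck. Qed.

Lemma A_cont i j : continuous (fun t => Am t i j).
Proof. by have := A_Ck 0; move=> /Ck_mxP; apply. Qed.

Lemma X_Ck k : Ck k X.
Proof.
elim: k => [|k IH].
  move=> x; apply: differentiable_continuous; apply/derivable1_diffP.
  by case: (dX x).
apply/CkSE; split.
  move=> x; apply/derivable1_diffP; by case: (dX x).
have -> : (fun x => 'D_1 X x) = (fun x => T *: (('J f (gamma x))^T *m X x)).
  by apply/funext => x; case: (dX x).
by apply: CkZ; apply: Ck_mulmx => //; exact: JT_Ck.
Qed.

Lemma dXv m (v : 'M[R]_(n, m)) t :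
  is_derive t (1 : R) (fun s => X s *m v) (Am t *m (X t *m v)).
Proof.
have H := @is_derive_mulmxr R n n m X v t _ (dX t).
apply: (is_derive_eq H).
by rewrite /Am -!scalemxAl mulmxA.
Qed.

Lemma X_unit (X0 : X 0 = 1%:M) t : X t \in unitmx.
Proof.
apply: contraT; rewrite unitmxE unitfE negbK -det_tr => /det0P [v v0 vX].
have Z0 : X t *m v^T = 0 by rewrite -[X t]trmxK -trmx_mul vX trmx0.
have := @ode_zero R n Am (fun s => X s *m v^T) t A_cont (@dXv 1 v^T) Z0 0.
rewrite X0 mul1mx => /(congr1 trmx); rewrite trmxK trmx0 => v0'.
by move: v0; rewrite v0' eqxx.
Qed.

Lemma fgam_deriv t :
  is_derive t (1 : R) (fun s => (f (gamma s))^T) (Am t *m (f (gamma t))^T).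
Proof.
have dg : differentiable gamma t by apply/derivable1_diffP; case: (dgam t).
have df : differentiable f (gamma t) by exact: (proj1 (sf 1) (gamma t)).
have dc := differentiable_comp dg df.
have H : is_derive t (1 : R) (f \o gamma) ((T *: f (gamma t)) *m 'J f (gamma t)).
  apply: DeriveDef; first by apply/derivable1_diffP.
  rewrite (deriveE (1 : R) dc) (diff_comp dg df) /= -(deriveE (1 : R) dg).
  have [_ ->] := dgam t.
  by rewrite -deriveE // deriveEjacobian.
have H2 := @is_derive_tr R 1 n _ t _ H.
apply: (is_derive_eq H2).
by rewrite trmx_mul /Am linearZ /= -scalemxAl -scalemxAr.
Qed.

Lemma X1F (X0 : X 0 = 1%:M) (gper : gamma 1 = gamma 0) :
  X 1 *m (f (gamma 0))^T = (f (gamma 0))^T.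
Proof.
pose F := (f (gamma 0))^T.
have dZ s : is_derive s (1 : R) (fun s => X s *m F - (f (gamma s))^T)
    (Am s *m (X s *m F - (f (gamma s))^T)).
  have H := is_deriveB (@dXv 1 F s) (fgam_deriv s).
  apply: (is_derive_eq H); by rewrite mulmxBr.
have Z0 : X 0 *m F - (f (gamma 0))^T = 0 by rewrite X0 mul1mx subrr.
have := @ode_zero R n Am _ 0 A_cont dZ Z0 1.
by rewrite gper => /eqP; rewrite subr_eq0 => /eqP.
Qed.

Lemma Q_Ck (X0 : X 0 = 1%:M) (Q0 : 'M[R]_n) k :
  Ck k (fun t => X t *m Q0 *m invmx (X t)).
Proof.
apply: Ck_mulmx; first by apply: Ck_mulmx; [exact: X_Ck | exact: Ck_cst].
by apply: Ck_invmx; [exact: X_unit | exact: X_Ck].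
Qed.

End Main.

Section LinAlg.
Context {R : realType}.

Lemma mx_nz m p (A : 'M[R]_(m, p)) : A != 0 -> exists i j, A i j != 0.
Proof.
move=> nz.
case: (boolP [exists i, exists j, A i j != 0]) => [/existsP[i /existsP[j h]]|h].
  by exists i, j.
exfalso; move/negP: nz; apply; apply/eqP/matrixP => i j; rewrite mxE.
apply/eqP; apply/negPn/negP => hij; move/negP: h; apply.
by apply/existsP; exists i; apply/existsP; exists j.
Qed.

Lemma conj_rank n (X Q : 'M[R]_n) : X \in unitmx -> \rank (X *m Q *m invmx X) = \rank Q.
Proof.
move=> uX.
rewrite mxrankMfree; last by rewrite row_free_unit unitmx_inv.
rewrite -mxrank_tr trmx_mul mxrankMfree ?mxrank_tr //.
by rewrite row_free_unit unitmx_tr.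
Qed.

Lemma Fw_nz n (F : 'cV[R]_n) (w : 'rV[R]_n) : F != 0 -> w != 0 -> F *m w != 0.
Proof.
move=> /mx_nz [i [i0 Fi]] /mx_nz [j0 [j wj]].
apply/eqP => /matrixP /(_ i j); rewrite !mxE big_ord1 => /eqP.
rewrite [i0]ord1 [j0]ord1 in Fi wj.
by rewrite mulf_eq0 (negbTE Fi) (negbTE wj).
Qed.

Lemma wF1 n (F : 'cV[R]_n) (w : 'rV[R]_n) : F != 0 -> w != 0 ->
  (1%:M - F *m w) *m (1%:M - F *m w) = 1%:M - F *m w -> w *m F = 1%:M.
Proof.
move=> F0 w0 E.
set c := (w *m F) 0 0.
have wFc : w *m F = c%:M by rewrite {1}[w *m F]mx11_scalar.
have E2 : (1%:M - F *m w) *m (1%:M - F *m w) =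
    1%:M - F *m w - F *m w + c *: (F *m w).
  rewrite mulmxBr !mulmxBl !mul1mx mulmx1 -mulmxA [w *m (F *m w)]mulmxA wFc.
  by rewrite mul_scalar_mx scalemxAr opprB addrA addrAC.
rewrite E2 in E.
have : (c - 1) *: (F *m w) = 0.
  apply/matrixP => i j; have := congr1 (fun M : 'M[R]_n => M i j) E.
  rewrite [in RHS]mxE !mxE /= => h; rewrite mulrBl mul1r.
  move: h; set x := (F *m w) i j; set y := c * x; set a := _%:R.
  move=> h; lra.
move/eqP; rewrite scaler_eq0 (negbTE (@Fw_nz n F w F0 w0)) orbF subr_eq0 => /eqP c1.
by rewrite wFc c1.
Qed.

Lemma rankQ0 n (F : 'cV[R]_n) (w : 'rV[R]_n) : F != 0 -> w *m F = 1%:M ->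
  \rank (1%:M - F *m w) = (n - 1)%N.
Proof.
move=> F0 wF.
have QF : (1%:M - F *m w) *m F = 0.
  by rewrite mulmxBl mul1mx -mulmxA wF mulmx1 subrr.
set Q := (1%:M - F *m w) in QF *.
have up : (1 <= n - \rank Q)%N.
  rewrite -mxrank_tr -mxrank_ker.
  apply: (@leq_trans (\rank F^T)); first by rewrite mxrank_tr lt0n mxrank_eq0.
  apply: mxrankS; apply/sub_kermxP.
  by rewrite -trmx_mul QF trmx0.
have lo : (n <= \rank Q + 1)%N.
  have := mxrank_add Q (F *m w).
  rewrite /Q subrK mxrank1 => h; apply: (leq_trans h); rewrite leq_add2l.
  apply: (leq_trans (mxrankM_maxl _ _)); exact: rank_leq_col.
have rn := rank_leq_row Q.
move: up lo rn; set r := \rank Q; move=> up lo rn.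
lia.
Qed.

End LinAlg.

Section Uniq.
Context {R : realType}.

Lemma uniq_proj n (B P0 Q0 : 'M[R]_n) (F : 'cV[R]_n) (w : 'rV[R]_n) :
  Q0 = 1%:M - F *m w -> w *m F = 1%:M -> B *m F = 0 -> B *m Q0 = Q0 *m B ->
  B *m P0 = P0 *m B -> P0 *m P0 = P0 -> \rank P0 = \rank Q0 ->
  restricts_bij_on_image B P0 -> P0 = Q0.
Proof.
move=> eQ wF BF BQ BP PP rk [_ inj surj].
have QB : Q0 *m B = B.
  by rewrite -BQ eQ mulmxBr mulmx1 mulmxA BF mul0mx subr0.
have PF : P0 *m F = 0.
  apply: inj; rewrite ?in_setE.
  - by exists F.
  - by exists 0; rewrite mulmx0.
  - by rewrite /= mulmx0 mulmxA BP -mulmxA BF mulmx0.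
have Hc j : Q0 *m (P0 *m (delta_mx j 0 : 'cV[R]_n)) = P0 *m (delta_mx j 0 : 'cV[R]_n).
  have [y _ hy] := surj (P0 *m (delta_mx j 0 : 'cV[R]_n)) (ex_intro _ _ erefl).
  by move: hy => /= <-; rewrite mulmxA QB.
have QP : Q0 *m P0 = P0.
  apply/matrixP => i j; move: (congr1 (fun v : 'cV[R]_n => v i 0) (Hc j)).
  by rewrite mulmxA -!colE !mxE.
have sub : (P0^T <= Q0^T)%MS by rewrite -QP trmx_mul submxMl.
have : (P0^T == Q0^T)%MS.
  by rewrite -(mxrank_leqif_eq sub).2 !mxrank_tr rk.
move=> /andP [_ /submxP [D eD]].
have eQ2 : Q0 = P0 *m D^T by rewrite -[Q0]trmxK eD trmx_mul trmxK.
have PQ : P0 *m Q0 = Q0 by rewrite eQ2 mulmxA PP.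
have : P0 = P0 *m (Q0 + F *m w) by rewrite eQ subrK mulmx1.
by rewrite mulmxDr PQ mulmxA PF mul0mx addr0.
Qed.

End Uniq.

Theorem mainTheorem7 (R : realType) (n : nat) (f : 'rV[R]_n -> 'rV[R]_n)
  (T : R) (gamma : R -> 'rV[R]_n) (X : R -> 'M[R]_n) (w : 'rV[R]_n) :
  (0 < n)%N ->
  smooth f ->
  0 < T ->
  (forall t : R, gamma (t + 1) = gamma t) ->
  (forall t : R, is_derive t (1 : R) gamma (T *: f (gamma t))) ->
  f (gamma 0) != 0 ->
  (forall t : R, is_derive t (1 : R) X (T *: ((('J f (gamma t))^T) *m X t))) ->
  X 0 = 1%:M ->
  let Gamma := fun t => X t *m (X 1 - 1%:M) *m invmx (X t) in
  let Q := fun t => X t *m (1%:M - (f (gamma 0))^T *m w) *m invmx (X t) in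
  (forall t : R, Q t *m Q t = Q t) ->
  (forall t : R, Q (t + 1) = Q t) ->
  (forall t : R, restricts_bij_on_image (Gamma t) (Q t)) ->
  (* Q itself is such a family ... *)
  (smooth Q /\
   (forall t : R, Q (t + 1) = Q t) /\
   (forall t : R, Q t *m Q t = Q t) /\
   (forall t : R, \rank (Q t) = (n - 1)%N) /\
   (forall t : R, X t *m Q 0 = Q t *m X t) /\
   (forall t : R, restricts_bij_on_image (Gamma t) (Q t))) /\
  (* ... and it is the unique one *)
  (forall P : R -> 'M[R]_n,
     smooth P ->
     (forall t : R, P (t + 1) = P t) ->
     (forall t : R, P t *m P t = P t) ->
     (forall t : R, \rank (P t) = (n - 1)%N) ->
     (forall t : R, X t *m P 0 = P t *m X t) ->
     (forall t : R, restricts_bij_on_image (Gamma t) (P t)) ->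
     forall t : R, P t = Q t).
Proof.
move=> n0 sf T0 gper dgam f0 dX X0 Gamma Q Qidem Qper Qbij.
have uX t : X t \in unitmx := X_unit f T gamma X sf dgam dX X0 t.
have g1 : gamma 1 = gamma 0 by have := gper 0; rewrite add0r.
have XF : X 1 *m (f (gamma 0))^T = (f (gamma 0))^T := X1F f T gamma X sf dgam dX X0 g1.
set F := (f (gamma 0))^T in XF.
have F0 : F != 0.
  apply: contra f0 => /eqP h; apply/eqP.
  by rewrite -[f (gamma 0)]trmxK -/F h trmx0.
set Q0 := 1%:M - F *m w.
have QE t : Q t = X t *m Q0 *m invmx (X t) by [].
have Q0E : Q 0 = Q0 by rewrite QE X0 invmx1 mul1mx mulmx1.
have G0 : Gamma 0 = X 1 - 1%:M by rewrite /Gamma X0 invmx1 mul1mx mulmx1.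
set B := X 1 - 1%:M in G0.
have BF : B *m F = 0 by rewrite mulmxBl XF mul1mx subrr.
have w0 : w != 0.
  apply/eqP => w0.
  have [_ inj _] := Qbij 0.
  have Qe : Q 0 = 1%:M by rewrite Q0E /Q0 w0 mulmx0 subr0.
  have : F = 0.
    apply: inj; rewrite ?in_setE /mx_image ?Qe.
    - by exists F; rewrite mul1mx.
    - by exists 0; rewrite mul1mx.
    - by rewrite /= G0 BF mulmx0.
  by move/eqP: F0.
have wF : w *m F = 1%:M.
  apply: (@wF1 R n F w F0 w0); have := Qidem 0; rewrite Q0E; exact.
have rkQ0 : \rank Q0 = (n - 1)%N := @rankQ0 R n F w F0 wF.
have rkQ t : \rank (Q t) = (n - 1)%N by rewrite QE conj_rank.
have XQ t : X t *m Q 0 = Q t *m X t by rewrite Q0E QE mulmxKV.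
split.
  split; first by move=> k; exact: (Q_Ck f T gamma X sf dgam dX X0).
  split; [exact: Qper | split; [exact: Qidem | split; [exact: rkQ | split; [exact: XQ | exact: Qbij]]]].
move=> P sP Pper Pidem Prk XP Pbij t.
have BQ : B *m Q0 = Q0 *m B.
  have h := Qper 0; rewrite add0r Q0E QE in h.
  have h2 : X 1 *m Q0 = Q0 *m X 1 by rewrite -{2}h mulmxKV.
  by rewrite /B mulmxBl [Q0 *m _]mulmxBr mul1mx mulmx1 h2.
have BP : B *m P 0 = P 0 *m B.
  have h := XP 1; rewrite -{2}(add0r 1) Pper in h.
  by rewrite /B mulmxBl mulmxBr mul1mx mulmx1 h.
have P0Q0 : P 0 = Q0.
  apply: (@uniq_proj R n B (P 0) Q0 F w) => //.
  - by rewrite Prk.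
  - by rewrite -G0; exact: Pbij 0.
have := XP t; rewrite P0Q0 => h.
by rewrite QE h mulmxK.
Qed.
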